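(* Let $X_\Sigma$ be a projective toric variety and $D$ an $\mathbf R$-ample divisor on $X_\Sigma$. For every primitive collection $C\subset\Sigma(1)$ there is a unique $\lambda_C\in\Lambda^D$ such that $\overline{S^{\chi_D}_{\lambda_C}}=V(x_\rho:\rho\in C)$ (Zariski closure in $\mathbf C^{\Sigma(1)}$).
   Context: $\Sigma$ complete fan with rays $\Sigma(1)$, generators $u_\rho$, divisors $D_\rho$; a primitive collection is $C\subset\Sigma(1)$ not contained in $\sigma(1)$ for any cone $\sigma$ while every proper subset is; $\mathbf C^{\Sigma(1)}=\mathrm{Spec}\,\mathbf C[x_\rho]$, $Z(\Sigma)=\bigcup_CV(x_\rho:\rho\in C)$. $\Gamma(G)=\{b\in\mathbf Z^{\Sigma(1)}:\sum b_\rho u_\rho=0\}$, $\langle\chi_D,b\rangle=\sum a_\rho b_\rho$ for $D=\sum a_\rho D_\rho$ (extended $\mathbf R$-linearly), $\Gamma(G)_{\mathbf R}\subset\mathbf R^{\Sigma(1)}$ with restricted standard norm. $\mathbf R$-ample divisors are elements of the ample cone in $\mathrm{Pic}(X_\Sigma)_{\mathbf R}$. For $x\in Z(\Sigma)$, $\sigma_x=\{v\in\Gamma(G)_{\mathbf R}:v_\rho\ge0\text{ whenever }x_\rho\ne0\}$; $v\mapsto\langle\chi_D,v\rangle/\|v\|$ attains its negative minimum $M^D(x)$ on $\sigma_x\setminus\{0\}$ exactly on one ray, and $\lambda^D_x$ is the vector on it with $\|\lambda^D_x\|=-M^D(x)$. $\Lambda^D=\{\lambda^D_x:x\in Z(\Sigma)\}$,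 $S^{\chi_D}_\lambda=\{x\in Z(\Sigma):\lambda^D_x=\lambda\}$. *)

(* Defs.v *)
From HB Require Import structures.
From mathcomp Require Import all_boot all_order all_algebra.
From mathcomp Require Import Rstruct.
From mathcomp Require Import complex.
From mathcomp Require Import mpoly.
Set Implicit Arguments. Unset Strict Implicit. Unset Printing Implicit Defensive.
Import Order.TTheory GRing.Theory Num.Theory.
Local Open Scope ring_scope.

Notation RR := Rdefinitions.R.
Notation CC := (Rdefinitions.R)[i].

Section Toric.
(* N = Z^n, rays indexed by 'I_r, u rho = minimal generator of ray rho *)
Variables (n r : nat) (u : 'I_r -> 'I_n -> int).

Definition mpair (m : 'I_n -> RR) (rho : 'I_r) : RR :=
  \sum_(i < n) m i * (u rho i)%:~R.

Definition in_cone (S : {set 'I_r}) (v : 'I_n -> RR) : Prop :=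
  exists c : 'I_r -> RR,
    (forall rho, 0 <= c rho) /\ (forall rho, rho \notin S -> c rho = 0) /\
    (forall i, v i = \sum_(rho < r) c rho * (u rho i)%:~R).

(* the cone generated by T is the face (cone S) ∩ m^⊥ for some m ≥ 0 on cone S *)
Definition is_face (S T : {set 'I_r}) : Prop :=
  T \subset S /\
  exists m : 'I_n -> RR,
    (forall rho, rho \in T -> mpair m rho = 0) /\
    (forall rho, rho \in S :\: T -> 0 < mpair m rho).

Definition primitive_vec (rho : 'I_r) : Prop :=
  \big[gcdz/0%Z]_(i < n) u rho i = 1%Z.

(* F = { sigma(1) : sigma in Sigma } : a (rational, strongly convex polyhedral)
   fan whose set of rays is exactly {rho} for rho : 'I_r, with minimal generators u. *)
Definition is_fan (F : {set {set 'I_r}}) : Prop :=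
  [/\ set0 \in F,
      (forall rho, [set rho] \in F),
      (forall rho, primitive_vec rho),
      (forall S T, S \in F -> is_face S T -> T \in F) &
      (forall S S', S \in F -> S' \in F ->
         [/\ is_face S (S :&: S'), is_face S' (S :&: S') &
             forall v, in_cone S v -> in_cone S' v -> in_cone (S :&: S') v])].

Definition complete_fan (F : {set {set 'I_r}}) : Prop :=
  forall v : 'I_n -> RR, exists2 S, S \in F & in_cone S v.

Definition maximal_cone (F : {set {set 'I_r}}) (S : {set 'I_r}) : Prop :=
  S \in F /\ forall S', S' \in F -> S \subset S' -> S' = S.

(* D = sum_rho a_rho D_rho is R-ample: its support function is (R-Cartier and)
   strictly convex, i.e. for each maximal cone sigma there is m_sigma with
   <m_sigma,u_rho> = -a_rho on sigma(1) and > -a_rho off sigma(1). *)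
Definition R_ample (F : {set {set 'I_r}}) (a : 'I_r -> RR) : Prop :=
  forall S, maximal_cone F S ->
    exists m : 'I_n -> RR,
      (forall rho, rho \in S -> mpair m rho = - a rho) /\
      (forall rho, rho \notin S -> - a rho < mpair m rho).

Definition primitive_collection (F : {set {set 'I_r}}) (C : {set 'I_r}) : Prop :=
  (forall S, S \in F -> ~~ (C \subset S)) /\
  (forall C' : {set 'I_r}, C' \proper C -> exists2 S, S \in F & C' \subset S).

Definition Vcoord (C : {set 'I_r}) (x : 'I_r -> CC) : Prop :=
  forall rho, rho \in C -> x rho = 0.

Definition in_Z (F : {set {set 'I_r}}) (x : 'I_r -> CC) : Prop :=
  exists C, primitive_collection F C /\ Vcoord C x.

Definition in_GammaR (v : 'I_r -> RR) : Prop :=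
  forall i : 'I_n, \sum_(rho < r) v rho * (u rho i)%:~R = 0.

Definition sigma_x (x : 'I_r -> CC) (v : 'I_r -> RR) : Prop :=
  in_GammaR v /\ forall rho, x rho != 0 -> 0 <= v rho.

Definition chi_pair (a v : 'I_r -> RR) : RR := \sum_(rho < r) a rho * v rho.

Definition vnorm (v : 'I_r -> RR) : RR := Num.sqrt (\sum_(rho < r) v rho ^+ 2).

(* lam = lambda^D_x : lam is on a ray of sigma_x \ {0} minimizing
   <chi_D,v>/||v||, and ||lam|| = - M^D(x) *)
Definition is_lambda (a : 'I_r -> RR) (x : 'I_r -> CC) (lam : 'I_r -> RR) : Prop :=
  [/\ sigma_x x lam, lam <> (fun _ => 0),
      (forall v, sigma_x x v -> v <> (fun _ => 0) ->
         chi_pair a lam / vnorm lam <= chi_pair a v / vnorm v) &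
      vnorm lam = - (chi_pair a lam / vnorm lam)].

Definition in_Lambda (F : {set {set 'I_r}}) (a : 'I_r -> RR) (lam : 'I_r -> RR) : Prop :=
  exists x, in_Z F x /\ is_lambda a x lam.

Definition stratum (F : {set {set 'I_r}}) (a : 'I_r -> RR) (lam : 'I_r -> RR)
  (x : 'I_r -> CC) : Prop :=
  in_Z F x /\ is_lambda a x lam.

End Toric.

Definition zariski_closure (r : nat) (S : ('I_r -> CC) -> Prop) (y : 'I_r -> CC) : Prop :=
  forall p : {mpoly CC[r]}, (forall x, S x -> p.@[x] = 0) -> p.@[y] = 0.

(* Main.v *)
Require Import Defs.
From HB Require Import structures.
From mathcomp Require Import all_boot all_order all_algebra.
From mathcomp Require Import Rstruct.
From mathcomp Require Import complex.
From mathcomp Require Import mpoly.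
From mathcomp Require Import all_classical all_reals all_analysis.
From mathcomp Require Import ring lra.
From Stdlib Require Import Classical FunctionalExtensionality.
Import Order.TTheory GRing.Theory Num.Theory.
Local Open Scope ring_scope.
Set Implicit Arguments. Unset Strict Implicit.

Section An.
Variable R : realType.
Local Open Scope classical_set_scope.
Import numFieldNormedType.Exports. Import Num.Def.

Lemma cont_sum (r k : nat) (f : 'I_k -> 'rV[R]_r -> R) :
  (forall i, continuous (f i)) -> continuous (fun v => \sum_i f i v).
Proof.
move=> H.
suff: forall s, continuous (fun v => \sum_(i <- s) f i v) by apply.
elim=> [|i s IH].
  under eq_fun do rewrite big_nil. exact: cst_continuous.
under eq_fun do rewrite big_cons.
move=> x; apply: (@continuousD R R^o _ (f i) (fun v => \sum_(j <- s) f j v) x).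
  exact: H. exact: IH.
Qed.

Lemma cont_coord (r : nat) (i : 'I_r) : continuous (fun v : 'rV[R]_r => v ord0 i).
Proof. exact: coord_continuous. Qed.

Lemma analytic_min (r k : nat) (c : 'I_r -> 'I_k -> R) (P : pred 'I_r) (a : 'I_r -> R)
  (v0 : 'I_r -> R) : (forall j, \sum_i v0 i * c i j = 0) -> (forall i, P i -> 0 <= v0 i) ->
  \sum_i v0 i ^+ 2 = 1 ->
  exists w : 'I_r -> R, [/\ (forall j, \sum_i w i * c i j = 0), (forall i, P i -> 0 <= w i),
     \sum_i w i ^+ 2 = 1 &
     forall v, (forall j, \sum_i v i * c i j = 0) -> (forall i, P i -> 0 <= v i) ->
        \sum_i v i ^+ 2 = 1 -> \sum_i a i * w i <= \sum_i a i * v i].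
Proof.
move=> h1 h2 h3.
pose A := [set v : 'rV[R]_r | (forall j, \sum_i v ord0 i * c i j = 0) /\ (forall i, P i -> 0 <= v ord0 i) /\
     \sum_i v ord0 i ^+ 2 = 1].
have A0 : A !=set0.
  exists (\row_i v0 i); rewrite /A /=; split; [|split].
  - by move=> j; under eq_bigr do rewrite mxE.
  - by move=> i Pi; rewrite mxE; apply: h2.
  - by under eq_bigr do rewrite mxE.
have cA : compact A.
  apply: bounded_closed_compact.
    exists 1; split; first exact: num_real.
    move=> x x1 v [_ [_ hv]].
    rewrite /normr /= mx_normrE; apply/bigmax_leP; split; first exact: ltW (lt_le_trans ltr01 (ltW x1)).
    move=> [i0 i] _ /=; rewrite (ord1 i0).
    apply: le_trans (ltW x1).
    have : v ord0 i ^+ 2 <= 1.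
      rewrite -hv (bigD1 i) //= lerDl; apply: sumr_ge0 => j _; exact: sqr_ge0.
    move=> hx; rewrite ler_norml; apply/andP; split; nra.
  have -> : A = (\bigcap_(j in [set: 'I_k]) ((fun v : 'rV[R]_r => \sum_i v ord0 i * c i j) @^-1` [set 0])) `&`
               ((\bigcap_(i in [set i | P i]) ((fun v : 'rV[R]_r => v ord0 i) @^-1` [set x | 0 <= x])) `&`
               ((fun v : 'rV[R]_r => \sum_i v ord0 i ^+ 2) @^-1` [set 1])).
    rewrite /A; apply/seteqP; split => v /=.
      by move=> [H1 [H2 H3]]; split; [move=> j _; apply: H1|split; [move=> i; apply: H2|]].
    by move=> [H1 [H2 H3]]; split; [move=> j; apply: H1|split; [move=> i; apply: H2|]].
  apply: closedI; [|apply: closedI].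
  - apply: closed_bigI => j _; apply: preimage_closed; last exact: closed_eq.
    move=> x _; apply: cont_sum => i; move=> y.
    apply: (@continuousM R _ (fun v : 'rV[R]_r => v ord0 i) (fun _ => c i j)).
      exact: cont_coord. exact: cst_continuous.
  - apply: closed_bigI => i _; apply: preimage_closed; last exact: closed_ge.
    move=> x _; exact: cont_coord.
  - apply: preimage_closed; last exact: closed_eq.
    move=> x _; apply: cont_sum => i; move=> y.
    rewrite /GRing.exp /=.
    apply: (@continuousM R _ (fun v : 'rV[R]_r => v ord0 i) (fun v : 'rV[R]_r => v ord0 i)); exact: cont_coord.
have cf : {within A, continuous (fun v : 'rV[R]_r => \sum_i a i * v ord0 i)}.
  apply: continuous_subspaceT => x; apply: cont_sum => i y.
  apply: (@continuousM R _ (fun _ => a i) (fun v : 'rV[R]_r => v ord0 i)).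
    exact: cst_continuous. exact: cont_coord.
have [w wA wmin] := compact_EVT_min A0 cA cf.
move: wA; rewrite inE => -[W1 [W2 W3]].
exists (fun i => w ord0 i); split => // v V1 V2 V3.
have := wmin (\row_i v i); rewrite !inE.
have -> : \sum_i a i * (\row_i v i) ord0 i = \sum_i a i * v i by apply: eq_bigr => i _; rewrite mxE.
apply.
split; [|split].
- by move=> j; under eq_bigr do rewrite mxE.
- by move=> i Pi; rewrite mxE; apply: V2.
- by under eq_bigr do rewrite mxE.
Qed.
End An.

Section Alg.
Variables (n r : nat) (u : 'I_r -> 'I_n -> int) (F : {set {set 'I_r}}) (a : 'I_r -> RR).
Hypotheses (hfan : is_fan u F) (hcomp : complete_fan u F) (hamp : R_ample u F a).

Definition qn (v : 'I_r -> RR) := \sum_rho v rho ^+ 2.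

Lemma qn_ge0 v : 0 <= qn v.
Proof. by apply: sumr_ge0 => i _; exact: sqr_ge0. Qed.

Lemma nz_ex (v : 'I_r -> RR) : v <> (fun _ => 0) -> exists rho, v rho != 0.
Proof.
move=> hv; case: (boolP [exists rho, v rho != 0]) => [/existsP[rho h]|/existsPn H].
  by exists rho.
exfalso; apply: hv; apply: functional_extensionality => rho.
by have := H rho; rewrite negbK => /eqP.
Qed.

Lemma qn_gt0 v : v <> (fun _ => 0) -> 0 < qn v.
Proof.
move=> /nz_ex [rho hr]; rewrite /qn (bigD1 rho) //=.
have h1 : 0 < v rho ^+ 2 by rewrite lt_def sqrf_eq0 hr sqr_ge0.
have h2 : 0 <= \sum_(i | i != rho) v i ^+ 2 by apply: sumr_ge0 => i _; exact: sqr_ge0.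
lra.
Qed.

Lemma vnorm_gt0 (v : 'I_r -> RR) : v <> (fun _ => 0) -> 0 < vnorm v.
Proof. by move=> h; rewrite /vnorm sqrtr_gt0; exact: qn_gt0. Qed.

Lemma vnorm_sq (v : 'I_r -> RR) : vnorm v ^+ 2 = qn v.
Proof. by rewrite /vnorm sqr_sqrtr // qn_ge0. Qed.

Lemma sum_mpair m v : in_GammaR u v -> \sum_rho mpair u m rho * v rho = 0.
Proof.
move=> hv; rewrite /mpair.
under eq_bigr do rewrite mulr_suml.
rewrite exchange_big /=; apply: big1 => i _.
transitivity (m i * \sum_rho v rho * (u rho i)%:~R); last by rewrite (hv i) mulr0.
rewrite mulr_sumr; apply: eq_bigr => rho _.
ring.
Qed.

Lemma chi_m m v : in_GammaR u v ->
  chi_pair a v = \sum_rho (a rho + mpair u m rho) * v rho.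
Proof.
move=> hv; under eq_bigr do rewrite mulrDl.
by rewrite big_split /= sum_mpair // addr0.
Qed.

Lemma max_ext S : S \in F -> exists S', maximal_cone F S' /\ S \subset S'.
Proof.
move=> SF.
case: (@arg_maxnP _ S (fun T => (T \in F) && (S \subset T)) (fun T => #|T|)).
  by rewrite SF subxx.
move=> T /andP[TF ST] Tmax; exists T; split => //; split => // S'' S''F TS''.
have := Tmax S''; rewrite S''F (fintype.subset_trans ST TS'') => /(_ isT) h.
by apply/esym/eqP; rewrite eqEcard TS'' /=; exact: h.
Qed.

Lemma chi_nonneg (T : {set 'I_r}) (lam : 'I_r -> RR) : in_GammaR u lam -> (forall rho, rho \notin T -> 0 <= lam rho) ->
  (exists2 S, S \in F & T \subset S) -> 0 <= chi_pair a lam.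
Proof.
move=> hG hpos [S SF TS].
have [S' [hS' SS']] := max_ext SF.
have [m [hm1 hm2]] := hamp hS'.
rewrite (chi_m m) //; apply: sumr_ge0 => rho _.
case: (boolP (rho \in S')) => h.
  by rewrite (hm1 rho h) addrN mul0r.
apply: mulr_ge0.
  have := hm2 rho h; lra.
apply: hpos; apply: contra h; apply: (fintype.subsetP (fintype.subset_trans TS SS')).
Qed.

Lemma lam_eq x lam : is_lambda u a x lam -> vnorm lam * vnorm lam = - chi_pair a lam.
Proof.
move=> [_ hne _ heq].
have hN := vnorm_gt0 hne.
by rewrite {1}heq mulNr divfK // gt_eqF.
Qed.

Lemma lam_chi_neg x lam : is_lambda u a x lam -> chi_pair a lam < 0.
Proof.
move=> hl; have e := lam_eq hl.
case: hl => [_ hne _ _]; have hN := vnorm_gt0 hne.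
nra.
Qed.

Lemma lam_neg_on_C (C : {set 'I_r}) x lam : primitive_collection F C -> is_lambda u a x lam ->
  (forall rho, rho \notin C -> 0 <= lam rho) -> forall rho, rho \in C -> x rho = 0.
Proof.
move=> [hC1 hC2] hl hpos rho rC; apply/eqP; apply/negPn/negP => hx.
have hneg := lam_chi_neg hl.
case: (hl) => [[hG hs] _ _ _].
have : 0 <= chi_pair a lam.
  apply: (@chi_nonneg (C :\ rho)) => //.
    move=> rho'; rewrite in_setD1 negb_and negbK; case/orP => [/eqP->|]; first exact: hs.
    exact: hpos.
  by apply: hC2; exact: properD1.
lra.
Qed.

Lemma chi_add (v w : 'I_r -> RR) : chi_pair a (fun i => v i + w i) = chi_pair a v + chi_pair a w.
Proof. by rewrite /chi_pair -big_split; apply: eq_bigr => i _; rewrite mulrDr. Qed.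

Lemma chi_scale t (v : 'I_r -> RR) : chi_pair a (fun i => t * v i) = t * chi_pair a v.
Proof. by rewrite /chi_pair mulr_sumr; apply: eq_bigr => i _; rewrite mulrCA. Qed.

Lemma qn_scale t (v : 'I_r -> RR) : qn (fun i => t * v i) = t ^+ 2 * qn v.
Proof. by rewrite /qn mulr_sumr; apply: eq_bigr => i _; rewrite exprMn. Qed.

Lemma gamma_add v w : in_GammaR u v -> in_GammaR u w -> in_GammaR u (fun i => v i + w i).
Proof.
move=> hv hw j.
transitivity (\sum_rho v rho * (u rho j)%:~R + \sum_rho w rho * (u rho j)%:~R); last by rewrite hv hw addr0.
by rewrite -big_split; apply: eq_bigr => i _; rewrite mulrDl.
Qed.

Lemma gamma_scale t v : in_GammaR u v -> in_GammaR u (fun i => t * v i).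
Proof.
move=> hv j.
transitivity (t * \sum_rho v rho * (u rho j)%:~R); last by rewrite hv mulr0.
by rewrite mulr_sumr; apply: eq_bigr => i _; rewrite mulrA.
Qed.

Lemma lam_unique x l1 l2 : is_lambda u a x l1 -> is_lambda u a x l2 -> l1 = l2.
Proof.
move=> h1 h2.
have e1 := lam_eq h1; have e2 := lam_eq h2.
case: h1 => [s1 n1 m1 q1]; case: h2 => [s2 n2 m2 q2].
have N1 := vnorm_gt0 n1; have N2 := vnorm_gt0 n2.
have i12 := m1 _ s2 n2; have i21 := m2 _ s1 n1.
have eN : vnorm l1 = vnorm l2.
  have : chi_pair a l1 / vnorm l1 = chi_pair a l2 / vnorm l2 by apply/eqP; rewrite eq_le i12 i21.
  by rewrite -(opprK (chi_pair a l1 / _)) -q1 -(opprK (chi_pair a l2 / _)) -q2 => /oppr_inj.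
pose w := fun i => l1 i + l2 i.
have sw : sigma_x u x w.
  case: s1 => g1 p1; case: s2 => g2 p2; split; first exact: gamma_add.
  by move=> rho h; apply: addr_ge0; [apply: p1|apply: p2].
have cw : chi_pair a w = chi_pair a l1 + chi_pair a l2 by rewrite chi_add.
have nw : w <> (fun _ => 0).
  move=> hw; have : chi_pair a w = 0.
    by rewrite hw /chi_pair; apply: big1 => i _; rewrite mulr0.
  rewrite cw; rewrite eN in e1; nra.
have Nw := vnorm_gt0 nw.
have := m1 _ sw nw.
rewrite -(opprK (chi_pair a l1 / _)) -q1 ler_pdivlMr // => hi.
have sqw := vnorm_sq w; have sq1 := vnorm_sq l1; have sq2 := vnorm_sq l2.
have par : qn (fun i => l1 i - l2 i) = 2 * qn l1 + 2 * qn l2 - qn w.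
  rewrite /qn !mulr_sumr -big_split -sumrB; apply: eq_bigr => i _ /=; rewrite /w; ring.
have hq : qn (fun i => l1 i - l2 i) <= 0.
  rewrite par -sqw -sq1 -sq2; rewrite cw in hi; rewrite eN in hi e1 N1 *.
  have hw2 : 2 * vnorm l2 <= vnorm w by nra.
  nra.
have hq0 : qn (fun i => l1 i - l2 i) = 0 by apply/eqP; rewrite eq_le hq qn_ge0.
apply: functional_extensionality => i.
have := @psumr_eq0P _ _ xpredT (fun i => (l1 i - l2 i) ^+ 2) (fun i _ => sqr_ge0 _) hq0 i isT.
by move/eqP; rewrite sqrf_eq0 subr_eq0 => /eqP.
Qed.

End Alg.

Section Ex.
Variables (n r : nat) (u : 'I_r -> 'I_n -> int) (F : {set {set 'I_r}}) (a : 'I_r -> RR).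
Hypotheses (hfan : is_fan u F) (hcomp : complete_fan u F) (hamp : R_ample u F a).

Lemma exists_lam (C : {set 'I_r}) : primitive_collection F C ->
  exists lam, is_lambda u a (fun rho => if rho \in C then 0 else 1) lam.
Proof.
move=> hC; have [hC1 hC2] := hC.
have [S SF [c [c0 [cS cE]]]] := hcomp (fun i => \sum_(rho in C) (u rho i)%:~R).
have [S' [hS' SS']] := max_ext SF.
have [m [hm1 hm2]] := hamp hS'.
pose v0 := fun rho => c rho - (rho \in C)%:R.
have g0 : in_GammaR u v0.
  move=> j; rewrite /v0.
  under eq_bigr do rewrite mulrBl.
  rewrite sumrB -(cE j); apply/eqP; rewrite subr_eq0 big_mkcond /=; apply/eqP; apply: eq_bigr => rho _.
  by case: (rho \in C); rewrite ?mul1r ?mul0r.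
have p0 : forall rho, rho \notin C -> 0 <= v0 rho.
  by move=> rho h; rewrite /v0 (negbTE h) subr0; exact: c0.
have [rho0 r0C r0S] : exists2 rho0, rho0 \in C & rho0 \notin S'.
  by have := hC1 S' (proj1 hS'); case/fintype.subsetPn => rho0 h1 h2; exists rho0.
have ch0 : chi_pair a v0 < 0.
  rewrite (chi_m a m g0) (bigD1 rho0) //=.
  have t1 : (a rho0 + mpair u m rho0) * v0 rho0 < 0.
    rewrite /v0 r0C (cS rho0 (contra (fintype.subsetP SS' rho0) r0S)) sub0r mulrN1 oppr_lt0.
    have := hm2 rho0 r0S; lra.
  have t2 : \sum_(i | i != rho0) (a i + mpair u m i) * v0 i <= 0.
    apply: sumr_le0 => i _; case: (boolP (i \in S')) => h.
      by rewrite (hm1 i h) addrN mul0r.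
    rewrite /v0 (cS i (contra (fintype.subsetP SS' i) h)) sub0r; apply: mulr_ge0_le0.
      have := hm2 i h; lra.
    by rewrite oppr_le0 ler0n.
  lra.
have nv0 : v0 <> (fun _ => 0).
  move=> h; move: ch0; rewrite h /chi_pair big1 ?ltxx // => i _; exact: mulr0.
have N0 := vnorm_gt0 nv0.
pose v1 := fun rho => (vnorm v0)^-1 * v0 rho.
have q1 : qn v1 = 1.
  by rewrite qn_scale -vnorm_sq exprVn mulVf // expf_neq0 // gt_eqF.
have g1 : in_GammaR u v1 by apply: gamma_scale.
have p1 : forall rho, rho \notin C -> 0 <= v1 rho.
  by move=> rho h; apply: mulr_ge0; [rewrite invr_ge0 ltW | apply: p0].
have [w [wg wp wq wmin]] := @analytic_min _ r n (fun rho j => ((u rho j)%:~R : RR)) (fun rho => rho \notin C) a v1 g1 p1 q1.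
pose M := chi_pair a w.
have wq' : qn w = 1 := wq.
have hM : M < 0.
  have h1 : M <= chi_pair a v1 := wmin v1 g1 p1 q1.
  have h2 : chi_pair a v1 < 0 by rewrite /v1 chi_scale pmulr_rlt0 ?invr_gt0.
  lra.
have nw : w <> (fun _ => 0).
  move=> h; have : qn w = 0 by rewrite /qn h; apply: big1 => i _; rewrite expr0n.
  by rewrite wq' => /eqP; rewrite oner_eq0.
have vl : vnorm (fun rho => - M * w rho) = - M.
  have -> : vnorm (fun rho => - M * w rho) = Num.sqrt (qn (fun rho => - M * w rho)) by [].
  rewrite qn_scale wq' mulr1 sqrtr_sqr ger0_norm //; lra.
have cl : chi_pair a (fun rho => - M * w rho) / vnorm (fun rho => - M * w rho) = M.
  by rewrite chi_scale vl -/M mulrAC mulfV ?mul1r // oppr_eq0 lt_eqF.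
exists (fun rho => - M * w rho); split.
- split; first exact: gamma_scale.
  move=> rho h; apply: mulr_ge0; first lra.
  apply: wp; apply: contra h => hr; by rewrite hr.
- move=> h; apply: nw; apply: functional_extensionality => rho.
  have := f_equal (fun f => f rho) h => /= /eqP; rewrite mulf_eq0 oppr_eq0 (lt_eqF hM) /=.
  by move/eqP.
- move=> v sv nv; rewrite cl.
  have Nv := vnorm_gt0 nv.
  pose v' := fun i => (vnorm v)^-1 * v i.
  have h1 : in_GammaR u v' by apply: gamma_scale; case: sv.
  have h2 : forall i, i \notin C -> 0 <= v' i.
    move=> i hi; apply: mulr_ge0; first by rewrite invr_ge0 ltW.
    by case: sv => _ hs; apply: hs; rewrite (negbTE hi) oner_eq0.
  have h3 : qn v' = 1 by rewrite qn_scale -vnorm_sq exprVn mulVf // expf_neq0 // gt_eqF.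
  have h4 : M <= chi_pair a v' := wmin v' h1 h2 h3.
  by move: h4; rewrite /v' chi_scale mulrC.
- by rewrite cl vl.
Qed.

End Ex.

Lemma zar_A (r : nat) (S : ('I_r -> CC) -> Prop) y : zariski_closure S y ->
  exists x, S x /\ forall rho, x rho = 0 -> y rho = 0.
Proof.
move=> hz.
case: (classic (exists x, S x /\ forall rho, x rho = 0 -> y rho = 0)) => // hn.
exfalso.
pose q (P : {set 'I_r}) : {mpoly CC[r]} :=
  if [pick rho | (rho \notin P) && (y rho != 0)] is Some rho then 'X_rho else 1.
pose p := \prod_(P : {set 'I_r}) q P.
have py : p.@[y] != 0.
  rewrite /p (big_morph (meval y) (mevalM y) (meval1 y)); apply/prodf_neq0 => P _; rewrite /q.
  case: pickP => [rho /andP[_ h]|_]; first by rewrite mevalXU.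
  by rewrite meval1 oner_eq0.
move/negP: py; apply; apply/eqP; apply: hz => x Sx.
pose P := [set rho | x rho != 0].
have [rho /andP[h1 h2]] : exists rho, (rho \notin P) && (y rho != 0).
  apply: NNPP => hne; apply: hn; exists x; split => // rho xr.
  apply/eqP; apply: contraT => yr; exfalso; apply: hne; exists rho.
  by rewrite inE xr eqxx.
rewrite /p (bigD1 P) //= mevalM /q.
case: pickP => [rho' /andP[h1' _]|hnone].
  by move: h1'; rewrite inE negbK => /eqP h; rewrite mevalXU h mul0r.
by have := hnone rho; rewrite h1 h2.
Qed.

Lemma zar_B (r : nat) (S : ('I_r -> CC) -> Prop) (C : {set 'I_r}) y :
  (forall x, (forall rho, (x rho == 0) = (rho \in C)) -> S x) ->
  (forall rho, rho \in C -> y rho = 0) -> zariski_closure S y.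
Proof.
move=> HS Hy p Hp.
pose V (i : 'I_r) : {poly CC} := if i \in C then 0 else (y i)%:P + 'X.
pose f := \sum_(m <- msupp p) (p@_m)%:P * \prod_i (V i) ^+ m i.
have fE t : f.[t] = p.@[fun i => (V i).[t]].
  rewrite mevalE /f horner_sum; apply: eq_bigr => m _.
  rewrite hornerCM horner_prod; congr (_ * _); apply: eq_bigr => i _.
  by rewrite horner_exp.
pose g := \prod_(i | i \notin C) ('X + (y i)%:P).
have gm : g \is monic by apply: monic_prod => i _; exact: monicXaddC.
have fg0 : f * g = 0.
  apply: (@roots_geq_poly_eq0 _ _ [seq k%:R | k <- iota 0 (size (f * g))]).
  - apply/allP => t _; rewrite /root hornerM.
    case: (eqVneq g.[t] 0) => [->|gt]; first by rewrite mulr0.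
    rewrite fE Hp ?mul0r //; apply: HS => rho.
    rewrite /V; case: (boolP (rho \in C)) => hC; first by rewrite hornerC eqxx.
    rewrite hornerD hornerC hornerX.
    move: gt; rewrite /g horner_prod => /prodf_neq0 /(_ rho hC).
    by rewrite hornerD hornerX hornerC addrC => /negbTE.
  - rewrite map_inj_uniq ?iota_uniq // => i j /eqP.
    by rewrite eqr_nat => /eqP.
  - by rewrite size_map size_iota.
have f0 : f = 0.
  by move/eqP: fg0; rewrite mulf_eq0 (negbTE (monic_neq0 gm)) orbF => /eqP.
have -> : y = fun i => (V i).[0].
  apply: functional_extensionality => i; rewrite /V.
  case: (boolP (i \in C)) => hC; first by rewrite hornerC Hy.
  by rewrite hornerD hornerC hornerX addr0.
by rewrite -fE f0 horner0.
Qed.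

Theorem corollary5p32 (n r : nat) (u : 'I_r -> 'I_n -> int)
  (F : {set {set 'I_r}}) (a : 'I_r -> RR) :
  is_fan u F -> complete_fan u F -> R_ample u F a ->
  forall C : {set 'I_r}, primitive_collection F C ->
  exists! lam : 'I_r -> RR,
    in_Lambda u F a lam /\
    (forall y : 'I_r -> CC,
       zariski_closure (stratum u F a lam) y <-> Vcoord C y).
Proof.
move=> hfan hcomp hamp C hC.
pose xC := fun rho : 'I_r => (if rho \in C then 0 else 1 : CC).
have [lamC hl] := exists_lam hcomp hamp hC.
have posC : forall rho, rho \notin C -> 0 <= lamC rho.
  by case: (hl) => [[_ hs] _ _ _] rho h; apply: hs; rewrite (negbTE h) oner_eq0.
have inZ : forall x, (forall rho, rho \in C -> x rho = 0) -> in_Z F x.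
  by move=> x hx; exists C; split.
have trans : forall x, (forall rho, (x rho == 0) = (rho \in C)) -> is_lambda u a x lamC.
  move=> x hx; case: (hl) => [[hg hs] hne hmin heq]; split => //.
  - split => // rho h; apply: hs.
    have hr : rho \notin C by rewrite -hx.
    by rewrite (negbTE hr) oner_eq0.
  - move=> v [vg vs] nv; apply: hmin => //; split => // rho h; apply: vs.
    have hr : rho \notin C by apply: contra h => hr; rewrite hr.
    by rewrite hx.
exists lamC; split.
- split.
  + exists xC; split; last exact: hl.
    by apply: inZ => rho hr; rewrite /xC hr.
  + move=> y; split.
    * move=> /zar_A [x [[hzx hlx] hxy]] rho hr; apply: hxy.
      exact: (lam_neg_on_C hamp hC hlx posC hr).
    * move=> hy; apply: (zar_B (C:=C)) => // x hx; split; last exact: trans.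
      by apply: inZ => rho hr; apply/eqP; rewrite hx.
- move=> lam' [_ hcl].
  have hyC : Vcoord C xC by move=> rho hr; rewrite /xC hr.
  have [x [[hzx hlx] hxy]] := zar_A (proj2 (hcl xC) hyC).
  have hxV : Vcoord C x.
    by apply: (proj1 (hcl x)) => p hp; apply: hp; split.
  have hx : forall rho, (x rho == 0) = (rho \in C).
    move=> rho; apply/idP/idP => [/eqP h | hr]; last by rewrite (hxV rho hr).
    case: (boolP (rho \in C)) => // hr'.
    by have := hxy rho h; rewrite /xC (negbTE hr') => /eqP; rewrite oner_eq0.
  exact: lam_unique (trans x hx) hlx.
Qed.
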